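(* Let $\mathcal{H}_A,\mathcal{H}_B,\mathcal{H}_C$ be finite-dimensional Hilbert spaces with $d_A=\dim\mathcal{H}_A$, let $\rho_{ABC}$ be pure, let $Z=\{|j\rangle\}_{j=1}^{d_A}$ be an orthonormal basis of $\mathcal{H}_A$, and let $\mathcal{S}_Z$ be the set of pure states $|\psi\rangle\in\mathcal{H}_A$ unbiased w.r.t. $Z$, i.e. of the form $|\psi\rangle=\sum_j \frac{e^{i\phi_j}}{\sqrt{d_A}}|j\rangle$. Then $$d_A^2\,\big\langle \mathrm{Tr}\big[\mathcal{T}_B(|\psi\rangle\langle\psi|)^2\big]\big\rangle_{\mathcal{S}_Z}=\mathrm{Tr}(\rho_B^2)+H_Q(Z|C),$$ where $\langle\cdot\rangle_{\mathcal{S}_Z}$ is the average over $|\psi\rangle\in\mathcal{S}_Z$ with the phases $\phi_j$ independent and uniformly distributed on $[0,2\pi)$.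
   Context: $\mathcal{T}_B$ is the linear map from operators on $\mathcal{H}_A$ to operators on $\mathcal{H}_B$ given by $\mathcal{T}_B(X)=\mathrm{Tr}_A[(X\otimes I_B)\rho_{AB}]$, with $\rho_{AB}=\mathrm{Tr}_C\rho_{ABC}$. $H_Q(Z|C)=\mathrm{Tr}(\rho_C^2)-\mathrm{Tr}(\tilde\rho_{M_ZC}^2)$, where $\tilde\rho_{M_ZC}=\sum_j|j\rangle\langle j|_{M_Z}\otimes\mathrm{Tr}_A[(|j\rangle\langle j|\otimes I_C)\rho_{AC}]$ for a register $M_Z$ with orthonormal basis $\{|j\rangle\}$; equivalently $H_Q(Z|C)=\mathrm{Tr}(\rho_C^2)-\sum_j\mathrm{Tr}\big[(\mathrm{Tr}_A[(|j\rangle\langle j|\otimes I_C)\rho_{AC}])^2\big]$. *)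

(* Defs.v *)
From mathcomp Require Import all_boot all_algebra complex.
From mathcomp Require Import all_classical all_reals all_analysis.
Set Implicit Arguments. Unset Strict Implicit. Unset Printing Implicit Defensive.
Import GRing.Theory Num.Theory.
Local Open Scope ring_scope.

Section QDefs.
Variable R : realType.
Local Notation C := R[i].

(* Linear operators on the Hilbert space C^I, I a finite index type
   (orthonormal basis), represented by their matrix entries. *)
Definition op (I : finType) := I -> I -> C.

Definition tr (I : finType) (X : op I) : C := \sum_i X i i.

Definition opmul (I : finType) (X Y : op I) : op I :=
  fun i k => \sum_j X i j * Y j k.

Definition tens (I J : finType) (X : op I) (Y : op J) : op (I * J)%type :=
  fun p q => X p.1 q.1 * Y p.2 q.2.

Definition idop (I : finType) : op I := fun i j => (i == j)%:R.

Definition ptr1 (I J : finType) (X : op (I * J)%type) : op J :=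
  fun j j' => \sum_i X (i, j) (i, j').

Definition ptr2 (I J : finType) (X : op (I * J)%type) : op I :=
  fun i i' => \sum_j X (i, j) (i', j).

Definition ketbra (I : finType) (v : I -> C) : op I :=
  fun i i' => v i * (v i')^*.

Definition proj (I : finType) (j : I) : op I :=
  fun i i' => ((i == j) && (i' == j))%:R.

Section Tripartite.
Variables (dA dB dC : nat).
Local Notation IA := 'I_dA.
Local Notation IB := 'I_dB.
Local Notation IC := 'I_dC.

Definition rhoABC (Psi : ((IA * IB) * IC)%type -> C) : op ((IA * IB) * IC)%type :=
  ketbra Psi.

Definition rhoAB Psi : op (IA * IB)%type := ptr2 (rhoABC Psi).

Definition rhoAC Psi : op (IA * IC)%type :=
  fun p q => \sum_b rhoABC Psi ((p.1, b), p.2) ((q.1, b), q.2).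

Definition rhoB Psi : op IB := ptr1 (rhoAB Psi).
Definition rhoC Psi : op IC := ptr1 (rhoAC Psi).

Definition TB Psi (X : op IA) : op IB :=
  ptr1 (opmul (tens X (@idop IB)) (rhoAB Psi)).

Definition HQ Psi : C :=
  tr (opmul (rhoC Psi) (rhoC Psi)) -
  \sum_(j : IA)
     (let M := ptr1 (opmul (tens (proj j) (@idop IC)) (rhoAC Psi)) in
      tr (opmul M M)).

Definition normalized (Psi : ((IA * IB) * IC)%type -> C) : Prop :=
  \sum_p `|Psi p| ^+ 2 = 1.
End Tripartite.

(* Average of F over phases phi_0, ..., phi_(n-1) independent and uniformly
   distributed on [0, 2 pi), computed as the iterated integral
   (2 pi)^-1 \int_[0,2pi) ... (2 pi)^-1 \int_[0,2pi) F(phi) dphi_(n-1) ... dphi_0 ;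
   coordinates >= n are set to 0. *)
Fixpoint phase_avg (n : nat) (F : (nat -> R) -> R) : R :=
  match n with
  | 0 => F (fun _ => 0)
  | n'.+1 =>
      (2 * pi)^-1 *
      Rintegral (@lebesgue_measure R) `[0, 2 * pi[%classic
        (fun t => phase_avg n'
           (fun phi => F (fun k => if k == n' then t else phi k)))
  end.

Definition cphase_avg (n : nat) (F : (nat -> R) -> C) : C :=
  Complex (phase_avg n (fun phi => complex.Re (F phi)))
          (phase_avg n (fun phi => complex.Im (F phi))).

Definition expi (t : R) : C := Complex (cos t) (sin t).

Definition unbiased (dA : nat) (phi : nat -> R) : 'I_dA -> C :=
  fun j => expi (phi (nat_of_ord j)) / Complex (Num.sqrt (dA%:R : R)) 0.

End QDefs.

(* Main.v *)
Require Import Defs.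
From mathcomp Require Import all_boot all_algebra complex.
From mathcomp Require Import all_classical all_reals all_analysis.
From mathcomp Require Import ring zify.
Import GRing.Theory Num.Theory numFieldNormedType.Exports.
Local Open Scope ring_scope.
Section S. Variable R : realType.
Lemma sin_nat2pi (n : nat) : sin (n%:R * (2 * pi)) = 0 :> R.
Proof. by rewrite mulr_natl mulr_natl -[X in sin X]add0r (periodicn (@sinD2pi R)) sin0. Qed.
Lemma cos_nat2pi (n : nat) : cos (n%:R * (2 * pi)) = 1 :> R.
Proof. by rewrite mulr_natl mulr_natl -[X in cos X]add0r (periodicn (@cosD2pi R)) cos0. Qed.
Lemma sin_int2pi (z : int) : sin (z%:~R * (2 * pi)) = 0 :> R.
Proof.
case: z => n; first by rewrite pmulrn sin_nat2pi.
by rewrite NegzE mulrNz mulNr sinN pmulrn sin_nat2pi oppr0.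
Qed.
Lemma cos_int2pi (z : int) : cos (z%:~R * (2 * pi)) = 1 :> R.
Proof.
case: z => n; first by rewrite pmulrn cos_nat2pi.
by rewrite NegzE mulrNz mulNr cosN pmulrn cos_nat2pi.
Qed.
Local Notation mu := (@lebesgue_measure R).
Lemma dsin (m x : R) : is_derive x 1 (fun t => sin (m * t)) (cos (m*x) * m).
Proof.
have h : is_derive x 1 (fun t : R => m * t) m.
  apply: trigger_derive. by rewrite /GRing.scale /= mulr1 ?mulr0 ?addr0.
exact: (is_derive1_comp (f:=sin) (g := fun t => m * t)).
Qed.
Lemma dcos (m x : R) : is_derive x 1 (fun t => cos (m * t)) (- sin (m*x) * m).
Proof.
have h : is_derive x 1 (fun t : R => m * t) m.
  apply: trigger_derive. by rewrite /GRing.scale /= mulr1 ?mulr0 ?addr0.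
exact: (is_derive1_comp (f:=cos) (g := fun t => m * t)).
Qed.
Lemma twopi_gt0 : 0 < 2 * pi :> R.
Proof. by rewrite mulr_gt0 ?pi_gt0. Qed.

Lemma cont_sc (a b m : R) : continuous (fun t : R => a * cos (m * t) - b * sin (m * t)).
Proof.
  have cm : continuous (fun t : R => m * t).
    by move=> x; apply: continuousM; [exact: cst_continuous | exact: cvg_id].
  have cc : continuous (fun t : R => cos (m * t)).
    by move=> x; apply: (@continuous_comp _ _ _ (fun t : R => m * t) cos); [exact: cm | exact: continuous_cos].
  have cs : continuous (fun t : R => sin (m * t)).
    by move=> x; apply: (@continuous_comp _ _ _ (fun t : R => m * t) sin); [exact: cm | exact: continuous_sin].
  move=> x; apply: (@continuousB _ _ _ (fun t => a * cos (m*t)) (fun t => b * sin (m*t))).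
    by apply: (@continuousM _ _ (fun=> a) (fun t => cos (m*t))); [exact: cst_continuous | exact: cc].
  by apply: (@continuousM _ _ (fun=> b) (fun t => sin (m*t))); [exact: cst_continuous | exact: cs].
Qed.

Lemma int_term (a b : R) (z : int) :
  Rintegral mu `[0, 2 * pi]%classic
    (fun t => a * cos (z%:~R * t) - b * sin (z%:~R * t))
  = (z == 0)%:R * a * (2 * pi).
Proof.
have cf := cont_sc a b z%:~R.
have [->|z0] := eqVneq z 0.
  rewrite mul1r.
  rewrite (_ : (fun t => _) = fun=> a); last first.
    by apply/funext=> t; rewrite mulr0z mul0r cos0 sin0 mulr1 mulr0 subr0.
  rewrite Rintegral_cst //= lebesgue_measure_itv /= lte_fin twopi_gt0 /= subr0.
  done.
set m : R := z%:~R.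
have m0 : m != 0 by rewrite /m intr_eq0.
pose F t := (a * sin (m * t) + b * cos (m * t)) / m.
have dF (x : R) : is_derive x 1 F (a * cos (m*x) - b * sin (m*x)).
  have := dsin m x; have := dcos m x => ? ?.
  apply: trigger_derive.
  rewrite scaler0 add0r /GRing.scale /=. by field.
have cF : continuous F.
  by move=> x; apply: differentiable_continuous; apply/derivable1_diffP; by have [] := dF x.
rewrite /Rintegral (@continuous_FTC2 _ _ F) ?twopi_gt0 //.
- by rewrite -EFinB /F mulr0 sin0 cos0 /m sin_int2pi cos_int2pi subrr !mul0r.
- exact/continuous_subspaceT.
- split.
  + by move=> x _; have [] := dF x.
  + by apply: cvg_at_right_filter; exact: cF.
  + by apply: cvg_at_left_filter; exact: cF.
- by move=> x _; rewrite derive1E derive_val.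
Qed.
Local Notation C := R[i].

Lemma cont_sum_seq (I : Type) (f : I -> R -> R) (r : seq I) :
  (forall i, continuous (f i)) -> continuous (fun t => \sum_(i <- r) f i t).
Proof.
move=> cf; elim: r => [|i r IH].
  rewrite (_ : (fun t => _) = fun=> 0); first exact: cst_continuous.
  by apply/funext => t; rewrite big_nil.
rewrite (_ : (fun t => _) = fun t => f i t + \sum_(j <- r) f j t); last first.
  by apply/funext => t; rewrite big_cons.
move=> x; apply: (@continuousD _ _ _ (f i) (fun t => \sum_(j <- r) f j t)).
  exact: cf. exact: IH.
Qed.

Lemma Rint_sum_seq (I : Type) (f : I -> R -> R) (r : seq I) :
  (forall i, continuous (f i)) ->
  Rintegral mu `[0, 2 * pi]%classic (fun t => \sum_(i <- r) f i t)
  = \sum_(i <- r) Rintegral mu `[0, 2 * pi]%classic (f i).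
Proof.
move=> cf; elim: r => [|i r IH].
  rewrite big_nil (_ : (fun t => _) = fun=> 0); last by apply/funext => t; rewrite big_nil.
  by rewrite Rintegral_cst // mul0r.
rewrite big_cons -IH (_ : (fun t => _) = fun t => f i t + \sum_(j <- r) f j t); last first.
  by apply/funext => t; rewrite big_cons.
rewrite RintegralD //.
  apply: continuous_compact_integrable; first exact: segment_compact.
  exact/continuous_subspaceT/cf.
apply: continuous_compact_integrable; first exact: segment_compact.
exact/continuous_subspaceT/cont_sum_seq.
Qed.

Lemma Rint_co_cc (f : R -> R) : continuous f ->
  Rintegral mu `[0, 2 * pi[%classic f = Rintegral mu `[0, 2 * pi]%classic f.
Proof.
move=> cf; apply: Rintegral_itv_bndo_bndc.
apply: (@integrableS _ _ _ mu `[0, 2 * pi]%classic) => //.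
  by apply: subset_itvl; rewrite bnd_simp.
apply: continuous_compact_integrable; first exact: segment_compact.
exact/continuous_subspaceT.
Qed.

Lemma Re_sum (I : finType) (f : I -> C) : complex.Re (\sum_i f i) = \sum_i complex.Re (f i).
Proof. by apply: (big_morph (@complex.Re R)) => // [[a b] [c d]]. Qed.
Lemma Im_sum (I : finType) (f : I -> C) : complex.Im (\sum_i f i) = \sum_i complex.Im (f i).
Proof. by apply: (big_morph (@complex.Im R)) => // [[a b] [c d]]. Qed.

Lemma expiD (x y : R) : expi (x + y) = expi x * expi y.
Proof. rewrite /expi cosD sinD /=. congr Complex; ring. Qed.

Lemma expi0 : expi 0 = 1 :> C.
Proof. by rewrite /expi cos0 sin0. Qed.

Lemma Re_mul_expi (d : C) (x : R) :
  complex.Re (d * expi x) = complex.Re d * cos x - complex.Im d * sin x.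
Proof. by case: d. Qed.

Lemma int1D (I : finType) (d : I -> C) (m : I -> int) :
  Rintegral mu `[0, 2 * pi[%classic
    (fun t => complex.Re (\sum_i d i * expi ((m i)%:~R * t)))
  = 2 * pi * complex.Re (\sum_i d i * ((m i == 0)%:R)).
Proof.
have E : (fun t => complex.Re (\sum_i d i * expi ((m i)%:~R * t))) =
   (fun t => \sum_i (complex.Re (d i) * cos ((m i)%:~R * t) - complex.Im (d i) * sin ((m i)%:~R * t))).
  by apply/funext => t; rewrite Re_sum; apply: eq_bigr => i _; rewrite Re_mul_expi.
rewrite E Rint_co_cc; last by apply: cont_sum_seq => i; exact: cont_sc.
rewrite Rint_sum_seq; last by move=> i; exact: cont_sc.
rewrite Re_sum mulr_sumr; apply: eq_bigr => i _.
rewrite int_term; case: eqP => _ /=.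
  by rewrite mulr1 mul1r mulrC.
by rewrite mulr0 !mul0r mulr0.
Qed.

Definition lin (n : nat) (w : nat -> int) (phi : nat -> R) : R :=
  \sum_(k < n) (w k)%:~R * phi k.

Lemma lin_upd n w phi t :
  lin n.+1 w (fun k => if k == n then t else phi k) = lin n w phi + (w n)%:~R * t.
Proof.
rewrite /lin big_ord_recr /= eqxx; congr (_ + _); apply: eq_bigr => k _.
by rewrite (ltn_eqF (ltn_ord k)).
Qed.

Lemma forall_recr (n : nat) (P : nat -> bool) :
  [forall k : 'I_n.+1, P k] = [forall k : 'I_n, P k] && P n.
Proof.
apply/forallP/andP => [H|[/forallP H1 H2] k].
  split; last exact: (H ord_max).
  by apply/forallP => k; exact: (H (widen_ord (leqnSn n) k)).
case: (ltnP k n) => [lt|ge]; first exact: (H1 (Ordinal lt)).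
have /eqP -> // : (k : nat) == n by rewrite eqn_leq ge -ltnS ltn_ord.
Qed.

Lemma twopi_neq0 : 2 * pi != 0 :> R.
Proof. by rewrite lt0r_neq0 // twopi_gt0. Qed.

Lemma avg_Re n : forall (I : finType) (c : I -> C) (w : I -> nat -> int),
  phase_avg n (fun phi => complex.Re (\sum_i c i * expi (lin n (w i) phi)))
  = complex.Re (\sum_i c i * ([forall k : 'I_n, w i k == 0])%:R).
Proof.
elim: n => [|n IH] I c w.
  rewrite /=; congr complex.Re; apply: eq_bigr => i _.
  rewrite /lin big_ord0 expi0 (_ : [forall k : 'I_0, _] = true) //; by apply/forallP => -[].
rewrite /=.
have E : (fun t => phase_avg n (fun phi => complex.Re (\sum_i c i *
        expi (lin n.+1 (w i) (fun k => if k == n then t else phi k)))))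
   = (fun t => complex.Re (\sum_i (c i * ([forall k : 'I_n, w i k == 0])%:R) *
        expi ((w i n)%:~R * t))).
  apply/funext => t.
  transitivity (phase_avg n (fun phi => complex.Re (\sum_i (c i * expi ((w i n)%:~R * t)) * expi (lin n (w i) phi)))).
    congr (phase_avg n _); apply/funext => phi; congr complex.Re.
    by apply: eq_bigr => i _; rewrite lin_upd addrC expiD mulrA.
  rewrite IH; congr complex.Re; apply: eq_bigr => i _; by rewrite mulrAC.
rewrite E int1D mulKf ?twopi_neq0 //; congr complex.Re; apply: eq_bigr => i _.
by rewrite -mulrA -natrM (forall_recr n (fun k => w i k == 0)) mulnb.
Qed.

Lemma cavg n (I : finType) (c : I -> C) (w : I -> nat -> int) :
  cphase_avg n (fun phi => \sum_i c i * expi (lin n (w i) phi))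
  = \sum_i c i * ([forall k : 'I_n, w i k == 0])%:R.
Proof.
rewrite /cphase_avg avg_Re.
have ImRe (z : C) : complex.Im z = complex.Re (Complex 0 (-1) * z).
  by case: z => a b /=; rewrite mul0r mulN1r sub0r opprK.
rewrite (_ : (fun phi => complex.Im _) = fun phi => complex.Re (\sum_i (Complex 0 (-1) * c i) * expi (lin n (w i) phi))); last first.
  apply/funext => phi; rewrite ImRe mulr_sumr; congr complex.Re.
  by apply: eq_bigr => i _; rewrite mulrA.
rewrite avg_Re.
rewrite (_ : \sum_i (Complex 0 (-1) * c i) * _ = Complex 0 (-1) * \sum_i c i * ([forall k : 'I_n, w i k == 0])%:R); last first.
  by rewrite mulr_sumr; apply: eq_bigr => i _; rewrite mulrA.
by rewrite -ImRe; case: (\sum_i _).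
Qed.

Lemma natC (n : nat) : (n%:R : C) = Complex (n%:R) 0.
Proof. elim: n => // n IH. rewrite -addn1 natrD IH natrD. by apply/eqP; rewrite eq_complex /= addr0 !eqxx. Qed.

Lemma cjx (a b : R) : (Complex a b)^* = Complex a (- b).
Proof. reflexivity. Qed.

Lemma conj_expi x : (expi x)^* = expi (- x) :> C.
Proof. by rewrite /expi cosN sinN. Qed.

Lemma ketbra_unb (d : nat) (phi : nat -> R) (a a' : 'I_d) :
  ketbra (@unbiased R d phi) a a' = (d%:R)^-1 * expi (phi a - phi a').
Proof.
rewrite /ketbra /unbiased rmorphM fmorphV /= conj_expi.
set s := Complex _ _.
have -> : s^* = s by rewrite /s cjx oppr0.
have ss : s * s = d%:R.
  rewrite natC /s; apply/eqP; rewrite eq_complex /= !mulr0 !mul0r subr0 addr0 eqxx andbT.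
  by rewrite -expr2 sqr_sqrtr.
rewrite mulrACA -expiD -invfM ss mulrC.
done.
Qed.

Definition wv (x1 x1' x2 x2' : nat) (k : nat) : int :=
  (k == x1)%:Z - (k == x1')%:Z + (k == x2)%:Z - (k == x2')%:Z.

Lemma ind_bool (n x1 x1' x2 x2' : nat) : (x1 < n)%N -> (x2 < n)%N ->
  [forall k : 'I_n, wv x1 x1' x2 x2' k == 0] =
  ((x1 == x1') && (x2 == x2')) || ((x1 == x2') && (x2 == x1')).
Proof.
move=> h1 h2; apply/idP/idP.
  move=> /forallP H.
  have E1 := H (Ordinal h1); have E2 := H (Ordinal h2).
  move: E1 E2; rewrite /wv /= !eqxx [x2 == x1]eq_sym.
  have [b1|b1] := boolP (x1 == x1'); rewrite ?b1 ?(negbTE b1) /=;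
  have [b2|b2] := boolP (x2 == x2'); rewrite ?b2 ?(negbTE b2) /=;
  have [b3|b3] := boolP (x1 == x2'); rewrite ?b3 ?(negbTE b3) /=;
  have [b4|b4] := boolP (x2 == x1'); rewrite ?b4 ?(negbTE b4) /=;
  have [b5|b5] := boolP (x1 == x2); rewrite ?b5 ?(negbTE b5) /=;
  move=> E1 E2; try done;
  move/eqP: b1 => b1; move/eqP: b2 => b2; move/eqP: b3 => b3; move/eqP: b4 => b4;
  move/eqP: b5 => b5; lia.
case/orP => /andP[/eqP<- /eqP<-]; apply/forallP => k; rewrite /wv.
  by rewrite subrr add0r subrr.
by rewrite subrK subrr.
Qed.

Definition e (x y : nat) : C := (x == y)%:R.

Lemma ind_ring (x1 x1' x2 x2' : nat) :
  ((((x1 == x1') && (x2 == x2')) || ((x1 == x2') && (x2 == x1'))) : nat)%:R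
  = e x1 x1' * e x2 x2' + e x1 x2' * e x2 x1' - e x1 x1' * e x2 x2' * e x1 x2 :> C.
Proof.
rewrite /e.
have [b1|b1] := boolP (x1 == x1'); rewrite ?b1 ?(negbTE b1) /=;
have [b2|b2] := boolP (x2 == x2'); rewrite ?b2 ?(negbTE b2) /=;
have [b3|b3] := boolP (x1 == x2'); rewrite ?b3 ?(negbTE b3) /=;
have [b4|b4] := boolP (x2 == x1'); rewrite ?b4 ?(negbTE b4) /=;
have [b5|b5] := boolP (x1 == x2); rewrite ?b5 ?(negbTE b5) /=;
first [ ring | (exfalso;
  move/eqP: b1 => b1; move/eqP: b2 => b2; move/eqP: b3 => b3; move/eqP: b4 => b4;
  move/eqP: b5 => b5; lia) ].
Qed.

Lemma sum_delta_r (n : nat) (F : 'I_n -> C) (i : 'I_n) : \sum_(j < n) F j * e i j = F i.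
Proof.
rewrite (bigD1 i) //= /e eqxx mulr1 big1 ?addr0 // => j ne.
by rewrite eq_sym (negbTE (ne : (j : nat) != i)) mulr0.
Qed.

Lemma sum_delta_l (n : nat) (F : 'I_n -> C) (i : 'I_n) : \sum_(j < n) F j * e j i = F i.
Proof.
rewrite (bigD1 i) //= /e eqxx mulr1 big1 ?addr0 // => j ne.
by rewrite (negbTE (ne : (j : nat) != i)) mulr0.
Qed.

Lemma lin_delta (n : nat) (phi : nat -> R) (x : 'I_n) :
  \sum_(k < n) (((k : nat) == x)%:Z)%:~R * phi k = phi x.
Proof.
rewrite (bigD1 x) //= eqxx mul1r big1 ?addr0 // => j ne.
by rewrite (negbTE (ne : (j : nat) != x)) mul0r.
Qed.

Lemma lin_wv (n : nat) (phi : nat -> R) (x1 x1' x2 x2' : 'I_n) :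
  lin n (wv x1 x1' x2 x2') phi = (phi x1 - phi x1') + (phi x2 - phi x2').
Proof.
rewrite /lin /wv.
under eq_bigr do rewrite intrB intrD intrB mulrBl mulrDl mulrBl.
rewrite sumrB big_split sumrB /= !lin_delta.
by rewrite addrA.
Qed.


Lemma sum_pair (I J : finType) (G : I * J -> C) :
  \sum_(r : I * J) G r = \sum_(i : I) \sum_(j : J) G (i, j).
Proof. by rewrite pair_big; apply: eq_bigr => -[]. Qed.

Lemma sum_idop_l (T : finType) (i : T) (F : T -> C) : \sum_(j : T) (i == j)%:R * F j = F i.
Proof.
rewrite (bigD1 i) //= eqxx mul1r big1 ?addr0 // => j ne.
by rewrite eq_sym (negbTE ne) mul0r.
Qed.


Lemma sum_bij (I J : finType) (F : I -> C) (G : J -> C) (h : J -> I) (h' : I -> J) :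
  cancel h h' -> cancel h' h -> (forall j, F (h j) = G j) -> \sum_i F i = \sum_j G j.
Proof.
move=> hK h'K FG; rewrite (reindex h); last by exists h' => x _.
by apply: eq_bigr => j _.
Qed.

Lemma sum6 (T1 T2 T3 T4 T5 T6 : finType) (F : T1 -> T2 -> T3 -> T4 -> T5 -> T6 -> C) :
  \sum_x1 \sum_x2 \sum_x3 \sum_x4 \sum_x5 \sum_x6 F x1 x2 x3 x4 x5 x6 =
  \sum_(p : T1 * (T2 * (T3 * (T4 * (T5 * T6))))) F p.1 p.2.1 p.2.2.1 p.2.2.2.1 p.2.2.2.2.1 p.2.2.2.2.2.
Proof.
rewrite sum_pair; apply: eq_bigr => x1 _; rewrite sum_pair; apply: eq_bigr => x2 _.
rewrite sum_pair; apply: eq_bigr => x3 _; rewrite sum_pair; apply: eq_bigr => x4 _.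
by rewrite sum_pair.
Qed.

Lemma sum5 (T1 T2 T3 T4 T5 : finType) (F : T1 -> T2 -> T3 -> T4 -> T5 -> C) :
  \sum_x1 \sum_x2 \sum_x3 \sum_x4 \sum_x5 F x1 x2 x3 x4 x5 =
  \sum_(p : T1 * (T2 * (T3 * (T4 * T5)))) F p.1 p.2.1 p.2.2.1 p.2.2.2.1 p.2.2.2.2.
Proof.
rewrite sum_pair; apply: eq_bigr => x1 _; rewrite sum_pair; apply: eq_bigr => x2 _.
rewrite sum_pair; apply: eq_bigr => x3 _; by rewrite sum_pair.
Qed.

Lemma sumI (T1 T2 : finType) (G : (T1 * T1) * ((T2 * T2) * (T2 * T2)) -> C) :
  \sum_i G i = \sum_b \sum_b' \sum_a1 \sum_a1' \sum_a2 \sum_a2' G ((b, b'), ((a1, a1'), (a2, a2'))).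
Proof.
rewrite sum_pair sum_pair; apply: eq_bigr => b _; apply: eq_bigr => b' _.
rewrite sum_pair sum_pair; apply: eq_bigr => a1 _; apply: eq_bigr => a1' _.
by rewrite sum_pair.
Qed.

Lemma prod_sum1 (I J : finType) (f : I -> C) (g : J -> C) :
  (\sum_i f i) * (\sum_j g j) = \sum_i \sum_j f i * g j.
Proof. rewrite mulr_suml; apply: eq_bigr => i _; by rewrite mulr_sumr. Qed.

Lemma prod_sum2 (I J K L : finType) (f : I -> J -> C) (g : K -> L -> C) :
  (\sum_i \sum_j f i j) * (\sum_k \sum_l g k l) = \sum_i \sum_j \sum_k \sum_l f i j * g k l.
Proof.
rewrite mulr_suml; apply: eq_bigr => i _; rewrite mulr_suml; apply: eq_bigr => j _.
by rewrite mulr_sumr; apply: eq_bigr => k _; rewrite mulr_sumr.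
Qed.



Section Collapse.
Variables (n : nat) (B : finType) (P : B -> B -> 'I_n -> 'I_n -> 'I_n -> 'I_n -> C).

Lemma T1_E :
  \sum_b \sum_b' \sum_(a1 < n) \sum_(a1' < n) \sum_(a2 < n) \sum_(a2' < n)
     P b b' a1 a1' a2 a2' * (e a1 a1' * e a2 a2')
  = \sum_b \sum_b' \sum_(a1 < n) \sum_(a2 < n) P b b' a1 a1 a2 a2.
Proof.
apply: eq_bigr => b _; apply: eq_bigr => b' _; apply: eq_bigr => a1 _.
transitivity (\sum_(a1' < n) (\sum_(a2 < n) P b b' a1 a1' a2 a2) * e a1 a1').
  apply: eq_bigr => a1' _; rewrite mulr_suml; apply: eq_bigr => a2 _.
  rewrite (eq_bigr (fun a2' => (P b b' a1 a1' a2 a2' * e a1 a1') * e a2 a2')).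
    by rewrite sum_delta_r.
  by move=> a2' _; rewrite mulrA.
by rewrite sum_delta_r.
Qed.

Lemma T2_E :
  \sum_b \sum_b' \sum_(a1 < n) \sum_(a1' < n) \sum_(a2 < n) \sum_(a2' < n)
     P b b' a1 a1' a2 a2' * (e a1 a2' * e a2 a1')
  = \sum_b \sum_b' \sum_(a1 < n) \sum_(a2 < n) P b b' a1 a2 a2 a1.
Proof.
apply: eq_bigr => b _; apply: eq_bigr => b' _; apply: eq_bigr => a1 _.
transitivity (\sum_(a1' < n) \sum_(a2 < n) P b b' a1 a1' a2 a1 * e a2 a1').
  apply: eq_bigr => a1' _; apply: eq_bigr => a2 _.
  rewrite (eq_bigr (fun a2' => (P b b' a1 a1' a2 a2' * e a2 a1') * e a1 a2')).
    by rewrite sum_delta_r.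
  by move=> a2' _; rewrite mulrA mulrAC.
rewrite exchange_big; apply: eq_bigr => a2 _.
by rewrite sum_delta_r.
Qed.

Lemma T3_E :
  \sum_b \sum_b' \sum_(a1 < n) \sum_(a1' < n) \sum_(a2 < n) \sum_(a2' < n)
     P b b' a1 a1' a2 a2' * (e a1 a1' * e a2 a2' * e a1 a2)
  = \sum_b \sum_b' \sum_(a1 < n) P b b' a1 a1 a1 a1.
Proof.
apply: eq_bigr => b _; apply: eq_bigr => b' _; apply: eq_bigr => a1 _.
transitivity (\sum_(a1' < n) (P b b' a1 a1' a1 a1) * e a1 a1').
  apply: eq_bigr => a1' _.
  transitivity (\sum_(a2 < n) (P b b' a1 a1' a2 a2 * e a1 a1') * e a1 a2).
    apply: eq_bigr => a2 _.
    rewrite (eq_bigr (fun a2' => (P b b' a1 a1' a2 a2' * e a1 a1' * e a1 a2) * e a2 a2')).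
      by rewrite sum_delta_r.
    by move=> a2' _; ring.
  by rewrite sum_delta_r.
by rewrite sum_delta_r.
Qed.
End Collapse.

Section Tri.
Variables (dA dB dC : nat) (Psi : (('I_dA * 'I_dB) * 'I_dC)%type -> C).
Local Notation rho := (rhoAB Psi).

Lemma TB_E (X : op R 'I_dA) b b' :
  TB Psi X b b' = \sum_(a : 'I_dA) \sum_(a' : 'I_dA) X a a' * rho (a', b) (a, b').
Proof.
rewrite /TB /ptr1 /opmul /tens /idop; apply: eq_bigr => a _.
rewrite sum_pair /=; apply: eq_bigr => a' _.
under eq_bigr do rewrite -mulrA mulrCA.
by rewrite sum_idop_l.
Qed.

Definition Pt (b b' : 'I_dB) (a1 a1' a2 a2' : 'I_dA) : C :=
  rho (a1', b) (a1, b') * rho (a2', b') (a2, b).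

Lemma Pt_E b b' a1 a1' a2 a2' : Pt b b' a1 a1' a2 a2' =
  \sum_c \sum_c' Psi ((a1', b), c) * (Psi ((a1, b'), c))^* * (Psi ((a2', b'), c') * (Psi ((a2, b), c'))^*).
Proof. by rewrite /Pt /rhoAB /ptr2 /rhoABC /ketbra prod_sum1. Qed.

Definition kk : C := (dA%:R)^-1 * (dA%:R)^-1.

Lemma integrand (phi : nat -> R) :
  (let T := TB Psi (ketbra (@unbiased R dA phi)) in tr (opmul T T)) =
  \sum_(i : ('I_dB * 'I_dB) * (('I_dA * 'I_dA) * ('I_dA * 'I_dA)))
     (kk * Pt i.1.1 i.1.2 i.2.1.1 i.2.1.2 i.2.2.1 i.2.2.2) *
     expi (lin dA (wv i.2.1.1 i.2.1.2 i.2.2.1 i.2.2.2) phi).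
Proof.
rewrite sumI /= /tr /opmul; apply: eq_bigr => b _; apply: eq_bigr => b' _.
rewrite !TB_E mulr_suml; apply: eq_bigr => a1 _; rewrite mulr_suml; apply: eq_bigr => a1' _.
rewrite mulr_sumr; apply: eq_bigr => a2 _; rewrite mulr_sumr; apply: eq_bigr => a2' _.
rewrite lin_wv expiD !ketbra_unb /Pt /kk; ring.
Qed.

Lemma rhoAB_E (a a' : 'I_dA) (b b' : 'I_dB) :
  rho (a, b) (a', b') = \sum_c Psi ((a, b), c) * (Psi ((a', b'), c))^*.
Proof. by []. Qed.

Lemma rhoC_E (c c' : 'I_dC) :
  rhoC Psi c c' = \sum_a \sum_b Psi ((a, b), c) * (Psi ((a, b), c'))^*.
Proof. by []. Qed.

Lemma A_E : tr (opmul (rhoB Psi) (rhoB Psi)) =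
  \sum_b \sum_b' \sum_(a1 < dA) \sum_(a2 < dA) Pt b b' a1 a1 a2 a2.
Proof.
rewrite /tr /opmul; apply: eq_bigr => b _; apply: eq_bigr => b' _.
by rewrite /rhoB /ptr1 prod_sum1.
Qed.

Lemma B_E : tr (opmul (rhoC Psi) (rhoC Psi)) =
  \sum_b \sum_b' \sum_(a1 < dA) \sum_(a2 < dA) Pt b b' a1 a2 a2 a1.
Proof.
rewrite /tr /opmul.
under eq_bigr do under eq_bigr do rewrite !rhoC_E prod_sum2.
rewrite (_ : \sum_b \sum_b' \sum_(a1 < dA) \sum_(a2 < dA) Pt b b' a1 a2 a2 a1 =
  \sum_b \sum_b' \sum_(a1 < dA) \sum_(a2 < dA) \sum_c \sum_c'
    Psi ((a2, b), c) * (Psi ((a1, b'), c))^* * (Psi ((a1, b'), c') * (Psi ((a2, b), c'))^*)); last first.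
  by do 4 (apply: eq_bigr => ? _); rewrite Pt_E.
rewrite !sum6.
apply: (@sum_bij _ _ _ _
  (fun q => (q.2.2.2.2.1, (q.2.2.2.2.2, (q.2.2.2.1, (q.1, (q.2.2.1, q.2.1))))))
  (fun p => (p.2.2.2.1, (p.2.2.2.2.2, (p.2.2.2.2.1, (p.2.2.1, (p.1, p.2.1))))))).
- by move=> [b [b' [a1 [a2 [c c']]]]].
- by move=> [c [c' [a [b [a' b']]]]].
move=> [b [b' [a1 [a2 [c c']]]]] /=; ring.
Qed.

Lemma M_E (j : 'I_dA) (c c' : 'I_dC) :
  ptr1 (opmul (tens (@Defs.proj R _ j) (@idop R 'I_dC)) (rhoAC Psi)) c c' = rhoAC Psi (j, c) (j, c').
Proof.
rewrite /ptr1 /opmul /tens /Defs.proj /idop /=.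
transitivity (\sum_(a < dA) (a == j)%:R * rhoAC Psi (j, c) (a, c')).
  apply: eq_bigr => a _; rewrite sum_pair /=.
  transitivity (\sum_(a'' < dA) (a'' == j)%:R * ((a == j)%:R * rhoAC Psi (a'', c) (a, c'))).
    apply: eq_bigr => a'' _.
    rewrite (eq_bigr (fun c'' => (c == c'')%:R * (((a == j) && (a'' == j))%:R * rhoAC Psi (a'', c'') (a, c')))).
      by rewrite sum_idop_l -mulnb natrM; ring.
    by move=> c'' _; ring.
  under eq_bigr do rewrite eq_sym.
  by rewrite sum_idop_l.
under eq_bigr do rewrite eq_sym.
by rewrite sum_idop_l.
Qed.

Lemma HQ_E : HQ Psi = tr (opmul (rhoC Psi) (rhoC Psi)) -
  \sum_b \sum_b' \sum_(a < dA) Pt b b' a a a a.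
Proof.
rewrite /HQ; congr (_ - _).
transitivity (\sum_(j < dA) \sum_c \sum_c' \sum_b \sum_b'
   Psi ((j, b), c) * (Psi ((j, b), c'))^* * (Psi ((j, b'), c') * (Psi ((j, b'), c))^*)).
  apply: eq_bigr => j _ /=.
  have HM : ptr1 (opmul (tens (@Defs.proj R _ j) (@idop R 'I_dC)) (rhoAC Psi)) =
            fun c c' => rhoAC Psi (j, c) (j, c').
    by apply/funext => c; apply/funext => c'; exact: M_E.
  rewrite HM /tr /opmul; apply: eq_bigr => c _; apply: eq_bigr => c' _.
  by rewrite /rhoAC /rhoABC /ketbra /= prod_sum1.
rewrite (_ : \sum_b \sum_b' \sum_(a < dA) Pt b b' a a a a =
  \sum_b \sum_b' \sum_(a < dA) \sum_c \sum_c'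
    Psi ((a, b), c) * (Psi ((a, b'), c))^* * (Psi ((a, b'), c') * (Psi ((a, b), c'))^*)); last first.
  by do 3 (apply: eq_bigr => ? _); rewrite Pt_E.
rewrite !sum5.
apply: (@sum_bij _ _ _ _
  (fun q => (q.2.2.1, (q.2.2.2.1, (q.2.2.2.2, (q.1, q.2.1)))))
  (fun p => (p.2.2.2.1, (p.2.2.2.2, (p.1, (p.2.1, p.2.2.1)))))).
- by move=> [b [b' [a [c c']]]].
- by move=> [j [c [c' [b b']]]].
move=> [b [b' [a [c c']]]] /=; ring.
Qed.
End Tri.
End S.

Theorem lemma1 (R : realType) (dA dB dC : nat)
    (Psi : (('I_dA * 'I_dB) * 'I_dC)%type -> R[i]) :
  normalized Psi ->
  (dA ^ 2)%:R *
    cphase_avg dA (fun phi =>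
      let T := TB Psi (ketbra (@unbiased R dA phi)) in tr (opmul T T))
  = tr (opmul (rhoB Psi) (rhoB Psi)) + HQ Psi.
Proof.
move=> _.
rewrite (funext (@integrand R dA dB dC Psi)) cavg.
rewrite (eq_bigr (fun i => kk R dA * (@Pt R dA dB dC Psi i.1.1 i.1.2 i.2.1.1 i.2.1.2 i.2.2.1 i.2.2.2 *
   (e R i.2.1.1 i.2.1.2 * e R i.2.2.1 i.2.2.2 + e R i.2.1.1 i.2.2.2 * e R i.2.2.1 i.2.1.2
    - e R i.2.1.1 i.2.1.2 * e R i.2.2.1 i.2.2.2 * e R i.2.1.1 i.2.2.1)))); last first.
  move=> [[b b'] [[a1 a1'] [a2 a2']]] _ /=.
  rewrite ind_bool ?ltn_ord // ind_ring; ring.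
rewrite -mulr_sumr.
rewrite (eq_bigr (fun i => @Pt R dA dB dC Psi i.1.1 i.1.2 i.2.1.1 i.2.1.2 i.2.2.1 i.2.2.2 *
   (e R i.2.1.1 i.2.1.2 * e R i.2.2.1 i.2.2.2) +
   @Pt R dA dB dC Psi i.1.1 i.1.2 i.2.1.1 i.2.1.2 i.2.2.1 i.2.2.2 * (e R i.2.1.1 i.2.2.2 * e R i.2.2.1 i.2.1.2)
   - @Pt R dA dB dC Psi i.1.1 i.1.2 i.2.1.1 i.2.1.2 i.2.2.1 i.2.2.2 *
   (e R i.2.1.1 i.2.1.2 * e R i.2.2.1 i.2.2.2 * e R i.2.1.1 i.2.2.1))); last first.
  by move=> i _; rewrite mulrBr mulrDr.
rewrite sumrB big_split /= !sumI /= T1_E T2_E T3_E.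
rewrite HQ_E A_E B_E -addrA.
set Y := (_ + (_ - _)).
have [dA0|dApos] := posnP dA.
  subst dA.
  rewrite expnS mul0n mul0r /Y.
  have Z3 (F : 'I_dB -> 'I_dB -> 'I_0 -> R[i]) : \sum_b \sum_b' \sum_(a < 0) F b b' a = 0.
    by apply: big1 => b _; apply: big1 => b' _; apply: big1 => -[].
  by rewrite !Z3 subrr addr0.
rewrite mulrA (_ : (dA ^ 2)%:R * kk R dA = 1) ?mul1r //.
rewrite /kk natrX expr2 mulrACA mulfV ?mulr1 // pnatr_eq0 -lt0n.
done.
Qed.
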